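(* Consider the deletion-only Qerror function $\mathbb{Q}:2^{R_x}\to\mathbb{R}$, $$\mathbb{Q}(X)=\sum_{j=1}^M \mathbb{Q}_j(X),\qquad \mathbb{Q}_j(X)=\frac{C_j+1}{C_j+1-\sum_{t_i\in X} w_{ij}}.$$ Then $\mathbb{Q}$ is supermodular: for all $A,B\subseteq R_x$, $$\mathbb{Q}(A\cup B)+\mathbb{Q}(A\cap B)\ \ge\ \mathbb{Q}(A)+\mathbb{Q}(B).$$
   Context: Setting: $R_x=\{t_1,\dots,t_N\}$ is a finite set of tuples and there are $M$ queries. The joint weights $w_{ij}\in\mathbb{Z}_{\ge0}$ satisfy $C_j=\sum_{i=1}^N w_{ij}$ for each $j$. For $X\subseteq R_x$, $\mathbb{Q}(X)$ is the total Qerror when exactly the tuples in $X$ are deleted. *)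

(* Defs.v *)
From HB Require Import structures.
From mathcomp Require Import all_boot all_order all_algebra.
Set Implicit Arguments. Unset Strict Implicit. Unset Printing Implicit Defensive.
Import Order.TTheory GRing.Theory Num.Theory.
Local Open Scope ring_scope.

(* Tuples t_1..t_N are indexed by 'I_N, queries by 'I_M;
   w i j : nat is the joint weight w_ij in Z_{>=0}. *)

Definition Ccount (N M : nat) (w : 'I_N -> 'I_M -> nat) (j : 'I_M) : nat :=
  (\sum_(i < N) w i j)%N.

Definition Qj (R : realFieldType) (N M : nat) (w : 'I_N -> 'I_M -> nat)
    (j : 'I_M) (X : {set 'I_N}) : R :=
  (Ccount w j).+1%:R / ((Ccount w j).+1%:R - (\sum_(i in X) w i j)%N%:R).

Definition Qerr (R : realFieldType) (N M : nat) (w : 'I_N -> 'I_M -> nat)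
    (X : {set 'I_N}) : R :=
  \sum_(j < M) Qj R w j X.

(* Main.v *)
Require Import Defs.
From HB Require Import structures.
From mathcomp Require Import all_boot all_order all_algebra.
From mathcomp Require Import ring lra.
Import Order.TTheory GRing.Theory Num.Theory.
Local Open Scope ring_scope.

Lemma key (R : realFieldType) (c i x y u : R) :
  x + y = u + i -> i <= x -> i <= y -> u < c -> 0 <= i ->
  c/(c-x) + c/(c-y) <= c/(c-u) + c/(c-i).
Proof.
move=> e hx hy hu h0.
have hi : i <= u by lra.
set p := c - i; set q := c - x; set r := c - y; set t := c - u.
have tp : 0 < t by rewrite /t; lra.
have qp : 0 < q by rewrite /q; lra.
have rp : 0 < r by rewrite /r; lra.
have pp : 0 < p by rewrite /p; lra.
have Hs : p + t = q + r by rewrite /p/t/q/r; lra.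
have E : c/t + c/p - (c/q + c/r) = c * (q + r) * ((q - t) * (r - t)) / (p*t*q*r).
  have -> : p = q + r - t by lra.
  field; rewrite !gt_eqF //; lra.
rewrite -subr_ge0 E; apply: divr_ge0; last by rewrite ltW // !mulr_gt0.
have cp : 0 <= c by lra.
apply: mulr_ge0; first by apply: mulr_ge0 => //; lra.
by apply: mulr_ge0; rewrite subr_ge0 /t /q /r; lra.
Qed.

Lemma sum_mod N (w : 'I_N -> nat) (A B : {set 'I_N}) :
  (\sum_(i in A) w i + \sum_(i in B) w i = \sum_(i in A :|: B) w i + \sum_(i in A :&: B) w i)%N.
Proof.
rewrite !(big_mkcond (fun i => i \in _)) -!big_split /=; apply: eq_bigr => i _.
rewrite in_setU in_setI; by case: (i \in A); case: (i \in B); rewrite ?addn0.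
Qed.

Lemma sum_sub N (w : 'I_N -> nat) (A B : {set 'I_N}) : A \subset B ->
  (\sum_(i in A) w i <= \sum_(i in B) w i)%N.
Proof.
move/subsetP=> s; rewrite !(big_mkcond (fun i => i \in _)) /=; apply: leq_sum => i _.
by case: ifP => // /s ->.
Qed.

Lemma sum_le N (w : 'I_N -> nat) (A : {set 'I_N}) :
  (\sum_(i in A) w i <= \sum_(i < N) w i)%N.
Proof.
rewrite (big_mkcond (fun i => i \in _)) /=; apply: leq_sum => i _; by case: ifP.
Qed.

Theorem theorem4p1 (R : realFieldType) (N M : nat) (w : 'I_N -> 'I_M -> nat)
    (A B : {set 'I_N}) :
  Qerr R w A + Qerr R w B <= Qerr R w (A :|: B) + Qerr R w (A :&: B).
Proof.
rewrite /Qerr -!big_split /=; apply: ler_sum => j _; rewrite /Qj.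
apply: key.
- by rewrite -!natrD sum_mod.
- by rewrite ler_nat; apply: sum_sub; apply: subsetIl.
- by rewrite ler_nat; apply: sum_sub; apply: subsetIr.
- by rewrite ltr_nat ltnS /Ccount; apply: sum_le.
- by [].
Qed.
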